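(* Let $0<t\le k<n$ be such that a Steiner system $S(t,k,n)$ exists. Then $$q'_0(t,k,n)\le \frac{\binom{n-1}{t-1}}{\binom{k-1}{t-1}}+1,\qquad q''_0(t,k,n)\le \frac{\binom{n}{t}}{\binom{k}{t}}-\frac{\binom{n-1}{t-1}}{\binom{k-1}{t-1}}+1.$$
   Context: $\mathbb{Z}_q=\{0,\dots,q-1\}$ (an alphabet); $\mathrm{wt}$ = number of nonzero coordinates; $d$ = Hamming distance; $J_q(n,w)$ = weight-$w$ words of $\mathbb{Z}_q^n$. An $(n,w,d)_q$ code of size $M$ is a subset $C\subseteq J_q(n,w)$ with $|C|=M$ and pairwise distances at least $d$. A Steiner system $S(t,k,n)$ is a pair $(N,B)$, $|N|=n$, $B$ a set of $k$-subsets (blocks) of $N$ with every $t$-subset of $N$ in exactly one block. For $t,k,n$ such that an $S(t,k,n)$ exists: $q'_0(t,k,n)$ is the smallest $q$ for which an $(n,k,2k-t+1)_q$ code of size $\binom{n}{t}/\binom{k}{t}$ exists, and $q''_0(t,k,n)$ is the smallest $q$ for which an $(n,n-k,n-t+1)_q$ code of size $\binom{n}{t}/\binom{k}{t}$ exists. *)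

(* Defs.v *)
From mathcomp Require Import all_boot.
Set Implicit Arguments. Unset Strict Implicit. Unset Printing Implicit Defensive.

Definition word (q n : nat) := {ffun 'I_n -> 'I_q}.

Definition wt (q n : nat) (x : word q n) : nat := #|[set i | nat_of_ord (x i) != 0]|.

Definition hdist (q n : nat) (x y : word q n) : nat := #|[set i | x i != y i]|.

Definition is_code (q n w d M : nat) (C : {set word q n}) : Prop :=
  [/\ #|C| = M,
      (forall x, x \in C -> wt x = w) &
      (forall x y, x \in C -> y \in C -> x != y -> (d <= hdist x y)%N)].

Definition code_exists (q n w d M : nat) : Prop :=
  exists C : {set word q n}, @is_code q n w d M C.

Definition steiner_system (t k n : nat) (B : {set {set 'I_n}}) : Prop :=
  (forall b, b \in B -> #|b| = k) /\
  (forall T : {set 'I_n}, #|T| = t -> #|[set b in B | T \subset b]| = 1).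

Definition steiner_exists (t k n : nat) : Prop := exists B : {set {set 'I_n}}, steiner_system t k B.

(* "q'_0(t,k,n) <= bound", i.e. the smallest q admitting an (n,k,2k-t+1)_q
   code of size C(n,t)/C(k,t) is at most bound. *)
Definition q0'_le (t k n bound : nat) : Prop :=
  exists2 q, q <= bound & code_exists q n k (2 * k - t + 1) ('C(n, t) %/ 'C(k, t)).

(* "q''_0(t,k,n) <= bound" for (n,n-k,n-t+1)_q codes of size C(n,t)/C(k,t). *)
Definition q0''_le (t k n bound : nat) : Prop :=
  exists2 q, q <= bound & code_exists q n (n - k) (n - t + 1) ('C(n, t) %/ 'C(k, t)).

(* Main.v *)
Require Import Defs.
From mathcomp Require Import all_boot zify.
Set Implicit Arguments. Unset Strict Implicit. Unset Printing Implicit Defensive.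

Lemma count_sub (T : finType) (A X : {set T}) m : A \subset X -> #|A| <= m ->
  #|[set S : {set T} | (A \subset S) && (S \subset X) && (#|S| == m)]|
  = 'C(#|X| - #|A|, m - #|A|).
Proof.
move=> AX Am.
have -> : #|X| - #|A| = #|X :\: A|.
  by rewrite cardsD (setIidPr AX).
rewrite -cards_draws.
have -> : [set S : {set T} | (A \subset S) && (S \subset X) && (#|S| == m)]
   = (fun U : {set T} => U :|: A) @: [set U : {set T} | U \subset X :\: A & #|U| == m - #|A|].
  apply/setP => S; apply/idP/idP.
  - rewrite inE => /andP[/andP[AS SX] /eqP HS].
    apply/imsetP; exists (S :\: A).
      rewrite inE; apply/andP; split; first by apply: setSD.
      by rewrite cardsD (setIidPr AS) HS.
    apply/setP => x; rewrite !inE; case: (boolP (x \in A)) => xA; last by rewrite orbF.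
    by rewrite orbT (subsetP AS).
  - case/imsetP => U; rewrite inE => /andP[UX /eqP HU] ->.
    rewrite inE subsetUr /= subUset AX andbT.
    apply/andP; split; first by apply: (subset_trans UX); apply: subsetDl.
    have dj : U :&: A = set0.
      apply/setP => x; rewrite !inE; apply/negbTE/negP => /andP[xU xA].
      by move: (subsetP UX x xU); rewrite !inE xA.
    rewrite cardsU dj cards0 HU subn0; apply/eqP; lia.
rewrite card_in_imset //.
move=> U V; rewrite !inE => /andP[UX _] /andP[VX _] E.
have h : forall W : {set T}, W \subset X :\: A -> W = (W :|: A) :\: A.
  move=> W WX; apply/setP => x; rewrite !inE.
  case: (boolP (x \in W)) => xW /=; last by case: (x \in A).
  by move: (subsetP WX x xW); rewrite !inE => /andP[-> _].
by rewrite (h U UX) (h V VX) E.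
Qed.

Lemma deg_count n t k (B : {set {set 'I_n}}) (A : {set 'I_n}) :
  steiner_system t k B -> #|A| <= t ->
  #|[set b in B | A \subset b]| * 'C(k - #|A|, t - #|A|) = 'C(n - #|A|, t - #|A|).
Proof.
case=> Hk Hu At.
set Ts := [set T : {set 'I_n} | (A \subset T) && (T \subset setT) && (#|T| == t)].
have E1 : \sum_(T in Ts) #|[set b in B | T \subset b]| = 'C(n - #|A|, t - #|A|).
  rewrite (eq_bigr (fun _ => 1)); last first.
    by move=> T; rewrite inE => /andP[_ /eqP]; apply: Hu.
  by rewrite sum1_card count_sub ?subsetT // cardsT card_ord.
have E2 : \sum_(b in B) #|[set T in Ts | T \subset b]|
    = #|[set b in B | A \subset b]| * 'C(k - #|A|, t - #|A|).
  rewrite (bigID (fun b : {set 'I_n} => A \subset b)) /=.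
  rewrite [X in _ + X](eq_bigr (fun _ => 0)); last first.
    move=> b /andP[_ Ab]; apply/eqP; rewrite cards_eq0; apply/eqP/setP => T.
    rewrite !inE; apply/negbTE/negP => /andP[/andP[/andP[AT _] _] Tb].
    by move/negP: Ab; apply; apply: subset_trans AT Tb.
  rewrite big1_eq addn0.
  rewrite (eq_bigr (fun _ => 'C(k - #|A|, t - #|A|))); last first.
    move=> b /andP[bB Ab]; rewrite -(Hk b bB) -count_sub //.
    apply: eq_card => T; rewrite !inE subsetT andbT.
    by case: (A \subset T); case: (T \subset b); case: (#|T| == t).
  rewrite -sum_nat_const; apply: eq_bigl => b; by rewrite inE.
rewrite -E1 -E2.
have C : forall (I J : finType) (P : pred I) (Q : pred J) (R : I -> J -> bool),
   \sum_(i in P) #|[set j in Q | R i j]| = \sum_(i in P) \sum_(j in Q) (R i j : nat).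
  move=> I J P Q R; apply: eq_bigr => i _; rewrite -sum1_card big_mkcond /=.
  by rewrite [RHS]big_mkcond /=; apply: eq_bigr => j; rewrite inE; case: (j \in Q); case: (R i j).
rewrite C C exchange_big /=. apply: eq_bigr => b _. by apply: eq_bigr.
Qed.

Lemma gen_code n m (B : {set {set 'I_n}}) (S : {set 'I_n} -> {set 'I_n}) w d :
  (forall i, #|[set c in B | i \in S c]| <= m) ->
  (forall b, b \in B -> #|S b| = w) -> 0 < d ->
  (forall b b', b \in B -> b' \in B -> b != b' -> d <= #|S b :|: S b'|) ->
  code_exists m.+1 n w d #|B|.
Proof.
move=> Hm Hw d0 Hd.
pose lab (b : {set 'I_n}) (i : 'I_n) : nat :=
  if i \in S b then (index b (enum [set c in B | i \in S c])).+1 else 0.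
have labK : forall b i, b \in B -> lab b i < m.+1.
  move=> b i bB; rewrite /lab; case: ifP => // iS.
  rewrite ltnS; apply: leq_trans (Hm i).
  by rewrite cardE index_mem mem_enum inE bB iS.
pose wd (b : {set 'I_n}) : word m.+1 n := [ffun i => inord (lab b i)].
have wdE : forall b i, b \in B -> nat_of_ord (wd b i) = lab b i.
  by move=> b i bB; rewrite ffunE inordK // labK.
have diff : forall b b', b \in B -> b' \in B -> b != b' ->
    S b :|: S b' \subset [set i | wd b i != wd b' i].
  move=> b b' bB b'B ne; apply/subsetP => i; rewrite !inE => Hi.
  apply/negP => /eqP/(congr1 (@nat_of_ord _)); rewrite !wdE // /lab.
  case: (boolP (i \in S b)) => ib; case: (boolP (i \in S b')) => ib' //=;
    last by move: Hi; rewrite (negbTE ib) (negbTE ib').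
  case => /(congr1 (nth b (enum [set c in B | i \in S c]))).
  rewrite !nth_index ?mem_enum ?inE ?bB ?b'B ?ib ?ib' // => E.
  by rewrite E eqxx in ne.
exists (wd @: B); split.
- rewrite card_in_imset // => b b' bB b'B E; apply/eqP; apply/negPn/negP => ne.
  have := leq_trans (Hd b b' bB b'B ne) (subset_leq_card (diff b b' bB b'B ne)).
  rewrite E.
  have -> : [set i | wd b' i != wd b' i] = set0 by apply/setP => i; rewrite !inE eqxx.
  rewrite cards0; lia.
- move=> x /imsetP[b bB ->]; rewrite /wt -(Hw b bB); apply: eq_card => i.
  by rewrite inE wdE // /lab; case: ifP.
- move=> x y /imsetP[b bB ->] /imsetP[b' b'B ->] ne.
  have nb : b != b' by apply: contraNneq ne => ->.
  rewrite /hdist; exact: leq_trans (Hd _ _ bB b'B nb) (subset_leq_card (diff _ _ bB b'B nb)).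
Qed.

Lemma inter_lt t k n (B : {set {set 'I_n}}) b b' : steiner_system t k B ->
  b \in B -> b' \in B -> b != b' -> #|b :&: b'| < t.
Proof.
case=> Hk Hu bB b'B ne; rewrite ltnNge; apply/negP => Ht.
have : 0 < #|[set T : {set 'I_n} | T \subset b :&: b' & #|T| == t]|.
  by rewrite cards_draws bin_gt0.
case/card_gt0P => T; rewrite inE => /andP[Tsub /eqP Tt].
have := Hu T Tt.
have : [set b; b'] \subset [set c in B | T \subset c].
  apply/subsetP => c; rewrite !inE => /orP[]/eqP->; rewrite ?bB ?b'B /=;
  apply: subset_trans Tsub _; [apply: subsetIl | apply: subsetIr].
by move/subset_leq_card; rewrite cards2 ne => h E; rewrite E in h.
Qed.

Theorem mainTheorem7 (t k n : nat) :
  0 < t -> t <= k -> k < n -> steiner_exists t k n ->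
  q0'_le t k n ('C(n.-1, t.-1) %/ 'C(k.-1, t.-1) + 1) /\
  q0''_le t k n ('C(n, t) %/ 'C(k, t) - 'C(n.-1, t.-1) %/ 'C(k.-1, t.-1) + 1).
Proof.
move=> t0 tk kn [B HB].
have cB : #|B| = 'C(n, t) %/ 'C(k, t).
  have h0 : #|(set0 : {set 'I_n})| <= t by rewrite cards0.
  have := deg_count HB h0.
  rewrite cards0 !subn0.
  have -> : [set b in B | set0 \subset b] = B by apply/setP => b; rewrite inE sub0set andbT.
  by move=> <-; rewrite mulnK // bin_gt0.
set r := 'C(n.-1, t.-1) %/ 'C(k.-1, t.-1).
have Hdeg1 : forall i, #|[set c in B | i \in c]| = r.
  move=> i; have h1 : #|[set i]| <= t by rewrite cards1.
  have := deg_count HB h1.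
  rewrite cards1 !subn1.
  have -> : [set b in B | [set i] \subset b] = [set c in B | i \in c].
    by apply/setP => c; rewrite !inE sub1set.
  by rewrite /r => <-; rewrite mulnK // bin_gt0; lia.
case: (HB) => Hk Hu.
split.
- exists r.+1; first by rewrite addn1.
  rewrite -cB; apply: (@gen_code _ _ _ id).
  + by move=> i; rewrite Hdeg1.
  + exact: Hk.
  + lia.
  + move=> b b' bB b'B ne; rewrite cardsU Hk // Hk //.
    have := inter_lt HB bB b'B ne; lia.
- exists (#|B| - r).+1; first by rewrite cB addn1.
  rewrite -cB; apply: (@gen_code _ _ _ (fun b => ~: b)).
  + move=> i.
    have : #|[set c in B | i \in c]| + #|[set c in B | i \in ~: c]| = #|B|.
      rewrite -(cardsID [set c : {set 'I_n} | i \in c] B); congr addn; apply: eq_card => c;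
      by rewrite !inE andbC.
    rewrite Hdeg1; lia.
  + by move=> b bB; have := cardsC b; rewrite Hk // card_ord; lia.
  + lia.
  + move=> b b' bB b'B ne; rewrite -setCI.
    have := cardsC (b :&: b'); rewrite card_ord.
    have := inter_lt HB bB b'B ne; lia.
Qed.
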